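(* Let $(X,d)$ be a compact metric space, $\mathbb{F}=\{f_n:n\in\mathbb{N}\}$ a sequence of continuous surjective self-maps of $X$, and $k\in\mathbb{N}$. If $(X,\mathbb{F})$ is weakly mixing (resp. topologically mixing) then $(X,\mathbb{F}_k)$ is weakly mixing (resp. topologically mixing). If the family $\mathbb{F}$ is feeble open, then $(X,\mathbb{F}_k)$ weakly mixing (resp. topologically mixing) implies $(X,\mathbb{F})$ weakly mixing (resp. topologically mixing).
   Context: Write $\omega_n=f_n\circ\cdots\circ f_1$ and, for $n>k$, $\omega^k_n=f_n\circ\cdots\circ f_{k+1}$; $\mathbb{F}_k=\{f_n:n\ge k+1\}$ is the truncated family, whose $n$-th composition ($n>k$) is $\omega^k_n$. $(X,\mathbb{F})$ is weakly mixing if for any non-empty open $U_1,U_2,V_1,V_2\subseteq X$ there is $n\in\mathbb{N}$ with $\omega_n(U_i)\cap V_i\neq\emptyset$ for $i=1,2$. $(X,\mathbb{F})$ is topologically mixing if for every pair of non-empty open $U,V$ there is $K$ with $\omega_n(U)\cap V\neq\emptyset$ for all $n\ge K$. The same notions for $(X,\mathbb{F}_k)$ use $\omega^k_n$ in place of $\omega_n$. $\mathbb{F}$ is feeble open if for every non-empty open $U$ and every $f\in\mathbb{F}$, $f(U)$ has non-empty interior. *)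

(* Defs.v *)
From HB Require Import structures.
From mathcomp Require Import all_boot all_order all_algebra.
From mathcomp Require Import all_classical all_reals all_analysis.
Set Implicit Arguments. Unset Strict Implicit. Unset Printing Implicit Defensive.
Import Order.TTheory GRing.Theory Num.Theory.
Local Open Scope classical_set_scope.

(* The family F = {f_n : n >= 1} is given by f : nat -> X -> X; f 0 is unused. *)

(* omega f k n = f_n o ... o f_(k+1) for n > k (identity when n <= k).
   In particular omega f 0 n = omega_n = f_n o ... o f_1. *)
Fixpoint omega {X : Type} (f : nat -> X -> X) (k n : nat) : X -> X :=
  match n with
  | 0 => id
  | m.+1 => if (k <= m)%N then f m.+1 \o omega f k m else id
  end.

Definition weakly_mixing_k {T : topologicalType} (f : nat -> T -> T) (k : nat) :=
  forall U1 U2 V1 V2 : set T,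
    open U1 -> open U2 -> open V1 -> open V2 ->
    U1 !=set0 -> U2 !=set0 -> V1 !=set0 -> V2 !=set0 ->
    exists n : nat, (k < n)%N /\
      (omega f k n @` U1 `&` V1 !=set0) /\ (omega f k n @` U2 `&` V2 !=set0).

Definition top_mixing_k {T : topologicalType} (f : nat -> T -> T) (k : nat) :=
  forall U V : set T, open U -> open V -> U !=set0 -> V !=set0 ->
    exists K : nat, forall n : nat, (K <= n)%N -> (k < n)%N ->
      omega f k n @` U `&` V !=set0.

Definition feeble_open {T : topologicalType} (f : nat -> T -> T) :=
  forall n : nat, (0 < n)%N -> forall U : set T, open U -> U !=set0 ->
    (interior (f n @` U)) !=set0.

(* Main.v *)
Require Import Defs.
From HB Require Import structures.
From mathcomp Require Import all_boot all_order all_algebra.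
From mathcomp Require Import all_classical all_reals all_analysis.
Local Open Scope classical_set_scope.

Lemma omega_id {X : Type} (f : nat -> X -> X) k : omega f k k = id.
Proof. by case: k => //= m; rewrite ltnn. Qed.

Lemma omega_comp0 {X : Type} (f : nat -> X -> X) k m :
  omega f 0 (k + m) = omega f k (k + m) \o omega f 0 k.
Proof.
elim: m => [|m IH]; first by rewrite addn0 omega_id.
rewrite addnS /= leq_addr IH; by [].
Qed.

Lemma omega_comp {X : Type} (f : nat -> X -> X) k n : (k <= n)%N ->
  omega f 0 n = omega f k n \o omega f 0 k.
Proof. by move=> /subnKC <-; exact: omega_comp0. Qed.

Lemma omega_cont {T : topologicalType} (f : nat -> T -> T) k n :
  (forall n : nat, (0 < n)%N -> continuous (f n)) -> continuous (omega f k n).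
Proof.
move=> fc; elim: n => [|n IH] /=; first by move=> x; exact: cvg_id.
case: ifP => _; last by move=> x; exact: cvg_id.
move=> x; apply: continuous_comp; first exact: IH.
exact: fc.
Qed.

Lemma omega_surj {X : Type} (f : nat -> X -> X) n :
  (forall n : nat, (0 < n)%N -> forall y : X, exists x : X, f n x = y) ->
  forall y, exists x, omega f 0 n x = y.
Proof.
move=> fs; elim: n => [|n IH] y /=; first by exists y.
have [z fz] := fs n.+1 isT y.
have [x ox] := IH z.
by exists x => /=; rewrite ox.
Qed.

Lemma sep_pts (R : realType) (X : metricType R) (p q : X) : p <> q ->
  exists A B : set X, [/\ open A, open B, A p, B q & A `&` B = set0].
Proof.
move=> /eqP pq.
have := (@metric_hausdorff R X); rewrite open_hausdorff => /(_ p q pq).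
case=> [[A B]] /= [/set_mem Ap /set_mem Bq] [oA oB /eqP AB].
by exists A, B.
Qed.

Lemma sep_one (R : realType) (X : metricType R) (g : X -> X) (U V : set X) :
  continuous g -> open U -> open V -> U !=set0 ->
  (forall p, exists2 y, V y & y <> p) ->
  exists U' V' : set X, [/\ open U', open V', U' !=set0, V' !=set0 &
     (U' `<=` U /\ V' `<=` V /\ forall x, U' x -> ~ V' (g x))].
Proof.
move=> gc oU oV [x Ux] hV.
have [y Vy ny] := hV (g x).
have [A [B [oA oB Agx By AB]]] := @sep_pts R X _ _ (nesym ny).
exists (U `&` g @^-1` A), (V `&` B); split.
- apply: openI => //; apply: open_comp => // z _; exact: gc.
- exact: openI.
- by exists x.
- by exists y.
split; first by move=> z [].
split; first by move=> z [].
- move=> z [_ Az] [_ Bz].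
  have : (A `&` B) (g z) by [].
  by rewrite AB.
Qed.

Lemma sep_iter (R : realType) (X : metricType R) (f : nat -> X -> X) (U V : set X) m :
  (forall n : nat, (0 < n)%N -> continuous (f n)) ->
  open U -> open V -> U !=set0 -> V !=set0 ->
  (forall (W : set X) p, open W -> W !=set0 -> exists2 y, W y & y <> p) ->
  exists U' V' : set X, [/\ open U', open V', U' !=set0, V' !=set0 &
     (U' `<=` U /\ V' `<=` V /\ forall n x, (0 < n)%N -> (n <= m)%N ->
        U' x -> ~ V' (omega f 0 n x))].
Proof.
move=> fc oU oV U0 V0 hW.
elim: m => [|m [U' [V' [oU' oV' U'0 V'0 [sU [sV H]]]]]].
  by exists U, V; split => //; split => //; split => // n x /leq_trans h /h.
have [U'' [V'' [oU'' oV'' U''0 V''0 [sU' [sV' H']]]]] :=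
  @sep_one R X (omega f 0 m.+1) U' V' (@omega_cont X f 0 m.+1 fc) oU' oV' U'0
    (fun p => hW V' p oV' V'0).
exists U'', V''; split => //.
split; first by move=> z /sU' /sU.
split; first by move=> z /sV' /sV.
move=> n x n0; rewrite leq_eqVlt => /orP [/eqP -> |nm] Ux.
  exact: H'.
move=> /sV'; apply: H => //; exact: sU'.
Qed.

Lemma feeble_iter {T : topologicalType} (f : nat -> T -> T) k (U : set T) :
  feeble_open f -> open U -> U !=set0 ->
  exists W : set T, [/\ open W, W !=set0 & W `<=` omega f 0 k @` U].
Proof.
move=> fo oU U0; elim: k => [|k [W [oW W0 sW]]].
  exists U; split => // x Ux; by exists x.
exists (interior (f k.+1 @` W)); split.
- exact: open_interior.
- exact: fo.
- move=> z /interior_subset [w /sW [x Ux <-] <-].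
  by exists x => //=.
Qed.

Theorem mainTheorem5 (R : realType) (X : metricType R)
  (f : nat -> X -> X) (k : nat) :
  compact [set: X] ->
  (forall n : nat, (0 < n)%N -> continuous (f n)) ->
  (forall n : nat, (0 < n)%N -> forall y : X, exists x : X, f n x = y) ->
  (weakly_mixing_k f 0 -> weakly_mixing_k f k) /\
  (top_mixing_k f 0 -> top_mixing_k f k) /\
  (feeble_open f ->
     (weakly_mixing_k f k -> weakly_mixing_k f 0) /\
     (top_mixing_k f k -> top_mixing_k f 0)).
Proof.
move=> _ fc fs.
have oc := fun n => @omega_cont X f 0 n fc.
have pre_open : forall (A : set X), open A -> open (omega f 0 k @^-1` A).
  by move=> A oA; apply: open_comp => // z _; exact: oc.
have pre_ne : forall (A : set X), A !=set0 -> (omega f 0 k @^-1` A) !=set0.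
  move=> A [y Ay]; have [x ox] := @omega_surj X f k fs y.
  by exists x; rewrite /= ox.
split.
  move=> wm U1 U2 V1 V2 oU1 oU2 oV1 oV2 U10 U20 V10 V20.
  have [[a [b ab]]|] := pselect (exists a b : X, a <> b); last first.
    move=> /forallNP single.
    have eq : forall x y : X, x = y.
      move=> x y; apply: contrapT => nxy; apply: (single x); by exists y.
    case: U10 => x1 U1x1; case: U20 => x2 U2x2.
    case: V10 => y1 V1y1; case: V20 => y2 V2y2.
    exists k.+1; split => //; split.
      by exists (omega f k k.+1 x1); split; [exists x1 | rewrite (eq (omega f k k.+1 x1) y1)].
    by exists (omega f k k.+1 x2); split; [exists x2 | rewrite (eq (omega f k k.+1 x2) y2)].
  have hW : forall (W : set X) p, open W -> W !=set0 -> exists2 y, W y & y <> p.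
    move=> W p oW [w Ww].
    have [//|] := pselect (exists2 y, W y & y <> p).
    move=> nW.
    have Wp : forall y, W y -> y = p.
      move=> y Wy; apply: contrapT => nyp; apply: nW; by exists y.
    have [q nqp] : exists q, q <> p.
      have [ap|ap] := pselect (a = p); last by exists a.
      by exists b => bp; apply: ab; rewrite ap bp.
    have [A [B [oA oB Ap Bq AB]]] := @sep_pts R X _ _ (nesym nqp).
    have B0 : B !=set0 by exists q.
    have W0 : W !=set0 by exists w.
    have [n [_ [[z1 [[x1 Wx1 <-] Wz]] [z2 [[x2 Wx2 <-] Bz]]]]] :=
      wm W W W B oW oW oW oB W0 W0 W0 B0.
    move: Wz Bz; rewrite (Wp _ Wx1) (Wp _ Wx2) => /Wp -> Bp.
    have : (A `&` B) p by [].
    by rewrite AB.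
  have [U' [V' [oU' oV' U'0 V'0 [sU [sV H]]]]] :=
    @sep_iter R X f _ V1 k fc (pre_open _ oU1) oV1 (pre_ne _ U10) V10 hW.
  have [n [n0 [[z1 [[x1 Ux1 <-] Vz1]] [z2 [[x2 Ux2 <-] Vz2]]]]] :=
    wm U' (omega f 0 k @^-1` U2) V' V2 oU' (pre_open _ oU2) oV' oV2
      U'0 (pre_ne _ U20) V'0 V20.
  have kn : (k < n)%N.
    rewrite ltnNge; apply/negP => nk; exact: (H n x1 n0 nk Ux1 Vz1).
  have ce := @omega_comp X f k n (ltnW kn).
  exists n; split; first exact: kn. split.
    exists (omega f 0 n x1); split; last exact: sV.
    exists (omega f 0 k x1); [exact: sU | rewrite ce; reflexivity].
  exists (omega f 0 n x2); split; last exact: Vz2.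
  exists (omega f 0 k x2); [exact: Ux2 | rewrite ce; reflexivity].
split.
  move=> tm U V oU oV U0 V0.
  have [K HK] := tm _ V (pre_open _ oU) oV (pre_ne _ U0) V0.
  exists K => n Kn kn.
  have [z [[x Ux <-] Vz]] := HK n Kn (leq_ltn_trans (leq0n k) kn).
  exists (omega f 0 n x); split; last exact: Vz.
  exists (omega f 0 k x); [exact: Ux | rewrite (@omega_comp X f k n (ltnW kn)); reflexivity].
move=> fo; split.
  move=> wm U1 U2 V1 V2 oU1 oU2 oV1 oV2 U10 U20 V10 V20.
  have [W1 [oW1 W10 sW1]] := @feeble_iter X f k _ fo oU1 U10.
  have [W2 [oW2 W20 sW2]] := @feeble_iter X f k _ fo oU2 U20.
  have [n [kn [[z1 [[x1 Wx1 <-] Vz1]] [z2 [[x2 Wx2 <-] Vz2]]]]] :=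
    wm W1 W2 V1 V2 oW1 oW2 oV1 oV2 W10 W20 V10 V20.
  have ce := @omega_comp X f k n (ltnW kn).
  exists n; split; first exact: (leq_ltn_trans (leq0n k) kn).
  have [y1 Uy1 ey1] := sW1 _ Wx1.
  have [y2 Uy2 ey2] := sW2 _ Wx2.
  split.
    exists (omega f k n x1); split; last exact: Vz1.
    exists y1; [exact: Uy1 | rewrite ce /= ey1; reflexivity].
  exists (omega f k n x2); split; last exact: Vz2.
  exists y2; [exact: Uy2 | rewrite ce /= ey2; reflexivity].
move=> tm U V oU oV U0 V0.
have [W [oW W0 sW]] := @feeble_iter X f k _ fo oU U0.
have [K HK] := tm W V oW oV W0 V0.
exists (maxn K k.+1) => n; rewrite geq_max => /andP [Kn kn] _.
have [z [[x Wx <-] Vz]] := HK n Kn kn.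
have [y Uy ey] := sW _ Wx.
exists (omega f k n x); split; last exact: Vz.
exists y; [exact: Uy | rewrite (@omega_comp X f k n (ltnW kn)) /= ey; reflexivity].
Qed.
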